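(* Let $p$ be an odd prime. Then \[\sum_{i=1}^{(p-1)/2}\left(S_{2i}^*-S_{2i-1}^*\right)\equiv -1\pmod p.\]
   Context: For $u\in\mathbb{F}_p$ and $0\le\ell<p$, $S_\ell^*(u)=\{S\subseteq\mathbb{F}_p^* \mid \#S=\ell,\ \sum_{s\in S}s=u\}$, where $\mathbb{F}_p^*=\mathbb{F}_p\setminus\{0\}$ and sums are in $\mathbb{F}_p$. The cardinality $\#S_\ell^*(u)$ does not depend on $u\in\mathbb{F}_p^*$; this common integer value is denoted $S_\ell^*$. *)

(* Defs.v *)
From mathcomp Require Import all_boot all_order all_algebra.
Unset Printing Implicit Defensive.
Import GRing.Theory.
Local Open Scope ring_scope.

Definition Sstar_set (p : nat) (l : nat) (u : 'F_p) : {set {set 'F_p}} :=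
  [set S : {set 'F_p} | [&& (0 : 'F_p) \notin S, (#|S| == l)%N & (\sum_(s in S) s) == u]].

Definition Sstar_card (p : nat) (l : nat) (u : 'F_p) : nat := #|Sstar_set p l u|.

(* S_l^* : the common value of #S_l^*(u) for u in F_p^*; we take u = 1. *)
Definition Sstar (p : nat) (l : nat) : nat := Sstar_card p l 1.

(* Main.v *)
Require Import Defs.
From mathcomp Require Import all_boot all_order all_algebra zify ring.
Import GRing.Theory.
Local Open Scope ring_scope.

Section Comb.
Variable p : nat.
Hypothesis hp : prime p.

Definition M (l : nat) (u : 'F_p) : {set {set 'F_p}} :=
  [set S : {set 'F_p} | (#|S| == l)%N && ((\sum_(s in S) s) == u)].

Lemma M_le l (u t : 'F_p) : leq #|M l u| #|M l (u + t *+ l)|.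
Proof.
have inj : injective (fun x : 'F_p => x + t) by exact: addIr.
rewrite -(card_imset _ (imset_inj inj)).
apply: subset_leq_card; apply/subsetP => _ /imsetP [S HS ->].
move: HS; rewrite !inE => /andP [/eqP cS /eqP sS].
rewrite card_imset // cS eqxx /=.
rewrite big_imset /=; last by move=> x y _ _; exact: inj.
by rewrite big_split /= sumr_const sS cS.
Qed.

Lemma M_const l (u v : 'F_p) : (0 < l < p)%N -> #|M l u| = #|M l v|.
Proof.
move=> /andP [l0 lp].
have nz : (l%:R : 'F_p) != 0.
  rewrite -(dvdn_pcharf (pchar_Fp hp)); apply/negP => /(dvdn_leq l0); by rewrite leqNgt lp.
have key : forall a b : 'F_p, leq #|M l a| #|M l b|.
  move=> a b; have := M_le l a ((b - a) / l%:R); rewrite -[_ *+ l]mulr_natr.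
  by rewrite divfK // addrC subrK.
by apply/eqP; rewrite eqn_leq !key.
Qed.

Lemma M_sum l : (0 < l < p)%N -> muln p #|M l 1| = 'C(p, l).
Proof.
move=> hl.
have E : 'C(p,l) = #|[set A : {set 'F_p} | #|A| == l]| by rewrite card_draws card_Fp.
have E2 : muln p #|M l 1| = muln #|'F_p| #|M l 1| by rewrite card_Fp.
rewrite E E2 -sum_nat_const -(sum1_card (mem [set A : {set 'F_p} | #|A| == l])).
rewrite (partition_big (fun S : {set 'F_p} => \sum_(s in S) s) predT) //=.
apply: eq_bigr => u _.
rewrite (M_const l 1 u hl) -sum1_card; apply: eq_bigl => S.
by rewrite !inE.
Qed.

Lemma M_split l : #|M l.+1 1| = addn (Sstar p l.+1) (Sstar p l).
Proof.
rewrite /Sstar /Sstar_card -(cardsID [set S : {set 'F_p} | 0 \notin S]).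
congr (_ + _)%N.
  apply: eq_card => S; rewrite !inE; case: (0 \in S) => //=; [by rewrite andbF | by rewrite andbT].
have -> : M l.+1 1 :\: [set S : {set 'F_p} | 0 \notin S] =
   [set (0 : 'F_p) |: S | S in Sstar_set p l 1].
  apply/setP => S; rewrite !inE; apply/idP/idP.
    move=> /andP [/negPn S0 /andP [/eqP cS /eqP sS]].
    apply/imsetP; exists (S :\ 0); last by rewrite setD1K.
    rewrite !inE eqxx /=.
    move: cS; rewrite (cardsD1 0 S) S0 add1n => [[->]]; rewrite eqxx /=.
    by move: sS; rewrite (big_setD1 _ S0) /= add0r => ->.
  move=> /imsetP [T]; rewrite !inE => /and3P [T0 /eqP cT /eqP sT] ->.
  rewrite setU11 /= cardsU1 T0 cT eqxx /= big_setU1 //= add0r sT //.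
rewrite card_in_imset // => A B; rewrite !inE => /and3P [A0 _ _] /and3P [B0 _ _] e.
by rewrite -(setU1K A0) e setU1K.
Qed.

Lemma S0 : Sstar p 0 = 0%N.
Proof.
rewrite /Sstar /Sstar_card; apply/eqP; rewrite cards_eq0; apply/eqP/setP => S.
rewrite !inE; apply/negP => /and3P [_ /eqP cS /eqP sS].
move/eqP: cS; rewrite cards_eq0 => /eqP ES; move: sS; rewrite ES big_set0 => /eqP.
by rewrite eq_sym oner_eq0.
Qed.

End Comb.
Lemma altsum (n m : nat) :
  \sum_(i < m.+1) (-1) ^+ i * ('C(n.+1, i))%:Z = (-1) ^+ m * ('C(n, m))%:Z.
Proof.
elim: m => [|m IH]; first by rewrite big_ord1 /= !bin0.
rewrite big_ord_recr /= IH binS PoszD exprS.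
ring.
Qed.

Lemma pairsum (F : nat -> int) (h : nat) :
  \sum_(1 <= i < h.+1) (F (2 * i)%N - F (2 * i - 1)%N) =
  \sum_(1 <= l < (2 * h).+1) (-1) ^+ l * F l.
Proof.
elim: h => [|h IH]; first by rewrite !big_geq.
rewrite big_nat_recr //= IH.
have -> : (2 * h.+1).+1 = (2 * h).+1.+1.+1 by lia.
rewrite (big_nat_recr (2 * h).+2) // (big_nat_recr (2 * h).+1) //=.
have e : (-1) ^+ (2 * h) = 1 :> int by rewrite exprM sqrrN !expr1n.
have -> : (2 * h.+1)%N = (2 * h).+1.+1 by lia.
have -> : ((2 * h).+1.+1 - 1)%N = (2 * h).+1 by lia.
rewrite !exprS e; ring.
Qed.

Lemma closed (p : nat) (hp : prime p) (l : nat) : (l < p)%N ->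
  (p * Sstar p l)%:Z + (-1) ^+ l = ('C(p.-1, l))%:Z.
Proof.
elim: l => [|l IH] hl; first by rewrite S0 muln0 bin0.
have IH' := IH (ltnW hl).
have e1 := @M_sum p hp l.+1.
have e2 := M_split p l.
have pS : p = p.-1.+1 by rewrite prednK // prime_gt0.
move: e1; rewrite /= hl => /(_ isT); rewrite e2 => e.
have eC : 'C(p, l.+1) = ('C(p.-1, l.+1) + 'C(p.-1, l))%N by rewrite -binS -pS.
rewrite eC in e.
have e' : (p * Sstar p l.+1)%:Z + (p * Sstar p l)%:Z =
   ('C(p.-1, l.+1))%:Z + ('C(p.-1, l))%:Z by rewrite -!PoszD -mulnDr e.
rewrite exprS; lia.
Qed.

Theorem proposition6 (p : nat) (hp : prime p) (hodd : odd p) :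
  (\sum_(1 <= i < (p - 1) %/ 2 + 1)
      ((Sstar p (2 * i))%:Z - (Sstar p (2 * i - 1))%:Z)%R
   = - 1 %[mod p])%Z.
Proof.
set h := ((p - 1) %/ 2)%N.
have p3 : (2 < p)%N.
  have := prime_gt1 hp; case: p hp hodd {h} => [|[|[|q]]] //.
have ph : p = (2 * h).+1.
  have := odd_double_half p; rewrite hodd -divn2 /h; lia.
have h1 : (0 < h)%N by lia.
suff -> : \sum_(1 <= i < h + 1) ((Sstar p (2 * i))%:Z - (Sstar p (2 * i - 1))%:Z) = -1 by [].
apply: (@mulfI _ (p%:Z)); first by rewrite eqz_nat; lia.
rewrite mulr_sumr addn1.
under eq_bigr => i _ do rewrite mulrBr -!PoszM.
rewrite (pairsum (fun l => (p * Sstar p l)%:Z)).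
have E : forall l, (l < p)%N -> (p * Sstar p l)%:Z = ('C(p.-1, l))%:Z - (-1) ^+ l.
  by move=> l hl; rewrite -(@closed p hp l hl) addrK.
rewrite big_nat_cond.
under eq_bigr => l /andP [/andP [l1 l2] _].
  rewrite E; last by lia.
  rewrite mulrBr -expr2 sqrr_sign.
  over.
rewrite -big_nat_cond sumrB.
have -> : p.-1 = (2 * h)%N by lia.
have A := altsum (2 * h).-1 (2 * h).
rewrite prednK in A; last by lia.
rewrite bin_small in A; last by lia.
rewrite mulr0 -(big_mkord xpredT (fun i => (-1) ^+ i * ('C(2 * h, i))%:Z)) in A.
rewrite big_ltn in A; last by lia.
rewrite expr0 mul1r bin0 in A.
have -> : \sum_(1 <= i < (2 * h).+1) (-1) ^+ i * ('C(2 * h, i))%:Z = -1.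
  by apply: (@addrI _ 1); rewrite A addrN.
rewrite sumr_const_nat subn1 /=.
rewrite {1}ph; lia.
Qed.
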